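(* Let $M_1=\{(t,0,0):t\in\mathbb{R}\}$ and $M_2=\{(0,t,1):t\in\mathbb{R}\}$. There exists $r_0>1$ such that every $\overline B_{r_0}$-ruled set $A\subset\mathbb H$ with $(M_1\cup M_2)\cap\overline B_{r_0}\subset A$ has nonempty interior.
   Context: $\mathbb H$ is $\mathbb{R}^3$ with product $uv=u+v+\frac12(x(u)y(v)-y(u)x(v))(0,0,1)$; a horizontal line is a set $w\{t h: t\in\mathbb{R}\}$ with $w\in\mathbb H$ and $h\in\langle(1,0,0),(0,1,0)\rangle\setminus\{0\}$. $d$ is the Carnot–Carathéodory metric, $B_r$ the closed $d$-ball of radius $r$ about $(0,0,0)$, and $\overline B_r$ its convex hull in $\mathbb{R}^3$. For a convex open (or convex) set $U\subset\mathbb H$, a set $A$ is $U$-ruled if for every horizontal line $L$ such that $L\cap U$ contains two distinct points of $A$, we have $L\cap U\subset A$. *)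

(* Defs.v *)
From HB Require Import structures.
From mathcomp Require Import all_boot all_order all_algebra.
From mathcomp Require Import all_classical all_reals all_analysis.
Set Implicit Arguments. Unset Strict Implicit. Unset Printing Implicit Defensive.
Import Order.TTheory GRing.Theory Num.Theory.
Import numFieldNormedType.Exports.
Local Open Scope classical_set_scope.
Local Open Scope ring_scope.

Section Heis.
Variable R : realType.

Definition H := (R * R * R)%type.
Definition hx (p : H) : R := p.1.1.
Definition hy (p : H) : R := p.1.2.
Definition hz (p : H) : R := p.2.

Definition hmul (u v : H) : H :=
  (hx u + hx v, hy u + hy v,
   hz u + hz v + 2^-1 * (hx u * hy v - hy u * hx v)).

Definition horizontal_line (L : set H) : Prop :=
  exists (w : H) (a b : R), (a != 0 \/ b != 0) /\
    L = [set hmul w (t * a, t * b, 0) | t in [set: R]].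

Definition lip01 (f : R -> R) : Prop :=
  exists C : R, forall s t, s \in `[0, 1] -> t \in `[0, 1] ->
    `|f s - f t| <= C * `|s - t|.

Definition horizontal_curve (x y z : R -> R) : Prop :=
  lip01 x /\ lip01 y /\ lip01 z /\
  {ae (@lebesgue_measure R), forall t, t \in `[0, 1] ->
     [/\ derivable x t 1, derivable y t 1, derivable z t 1 &
         derive1 z t = 2^-1 * (x t * derive1 y t - y t * derive1 x t)]}.

Definition hlength (x y : R -> R) : R :=
  fine (\int[(@lebesgue_measure R)]_(t in `[0, 1]%classic)
          (Num.sqrt (derive1 x t ^+ 2 + derive1 y t ^+ 2))%:E).

Definition cc_dist (p q : H) : R :=
  inf [set l | exists x y z : R -> R, horizontal_curve x y z /\
          (x 0, y 0, z 0) = p /\ (x 1, y 1, z 1) = q /\ l = hlength x y].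

Definition origin : H := (0, 0, 0).

Definition Bcc (r : R) : set H := [set p | cc_dist origin p <= r].

Definition hadd (u v : H) : H := (hx u + hx v, hy u + hy v, hz u + hz v).
Definition hscale (l : R) (u : H) : H := (l * hx u, l * hy u, l * hz u).
Definition convex_set (C : set H) : Prop :=
  forall u v l, C u -> C v -> 0 <= l -> l <= 1 ->
    C (hadd (hscale l u) (hscale (1 - l) v)).

Definition convex_hull (S : set H) : set H :=
  [set p | forall C, convex_set C -> S `<=` C -> C p].

Definition Bbar (r : R) : set H := convex_hull (Bcc r).

Definition ruled (U A : set H) : Prop :=
  forall L, horizontal_line L ->
    (exists p q, p != q /\ (L `&` U `&` A) p /\ (L `&` U `&` A) q) ->
    L `&` U `<=` A.

Definition M1 : set H := [set (t, 0, 0) | t in [set: R]].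
Definition M2 : set H := [set (0, t, 1) | t in [set: R]].

End Heis.

(* Main.v *)
Require Import Defs.
From HB Require Import structures.
From mathcomp Require Import all_boot all_order all_algebra.
From mathcomp Require Import all_classical all_reals all_analysis.
From mathcomp Require Import ring lra.
Import Order.TTheory GRing.Theory Num.Theory.
Import numFieldNormedType.Exports.
Local Open Scope classical_set_scope.
Local Open Scope ring_scope.
Set Implicit Arguments. Unset Strict Implicit.
Section T.
Variable R : realType.
Lemma dd (f : R -> R) (t df : R) : is_derive t 1 f df -> derivable f t 1 /\ derive1 f t = df.
Proof. move=> h; split; [exact: ex_derive| by rewrite derive1E derive_val]. Qed.

Lemma d1 (e k : R) (t : R) : is_derive t 1 (fun s : R => e * s + k * s ^+ 2) (e + 2 * k * t).
Proof. apply: is_derive_eq. rewrite /GRing.scale /=. ring. Qed.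
Lemma d2 (a : R) (t : R) : is_derive t 1 (fun s : R => a * s) a.
Proof. apply: is_derive_eq. rewrite /GRing.scale /=. ring. Qed.
Lemma d3 (c : R) (t : R) : is_derive t 1 (fun s : R => c * s ^+ 3) (c * 3 * t^+2).
Proof. apply: is_derive_eq. rewrite /GRing.scale /=. ring. Qed.

Lemma in01 (t : R) : t \in `[0, 1] -> 0 <= t <= 1.
Proof. by rewrite in_itv. Qed.

Lemma curve_ok (a e k : R) : horizontal_curve (fun s => a * s) (fun s => e * s + k * s ^+ 2)
   (fun s => (a * k / 6) * s ^+ 3).
Proof.
split; [|split; [|split]].
- exists `|a| => s t _ _. rewrite -mulrBr normrM. done.
- exists (`|e| + 2 * `|k|) => s t /in01 hs /in01 ht.
  have -> : e * s + k * s ^+ 2 - (e * t + k * t ^+ 2) = (e + k * (s + t)) * (s - t) by ring.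
  rewrite normrM ler_wpM2r //.
  apply: (le_trans (ler_normD _ _)); rewrite lerD2l normrM mulrC ler_wpM2r //.
  rewrite ger0_norm; lra.
- exists (`|a * k / 6| * 3) => s t /in01 hs /in01 ht.
  have -> : a * k / 6 * s ^+ 3 - a * k / 6 * t ^+ 3 = (a * k / 6) * ((s^+2 + s * t + t^+2) * (s - t)) by ring.
  set c := a * k / 6.
  rewrite (normrM c) -mulrA ler_wpM2l // normrM ler_wpM2r //.
  rewrite ger0_norm; nra.
- apply: aeW => t _.
  have [h1 h1'] := dd (d2 a t).
  have [h2 h2'] := dd (d1 e k t).
  have [h3 h3'] := dd (d3 (a * k / 6) t).
  split => //. rewrite h1' h2' h3'. by field.
Qed.
Lemma len_le (a e k : R) : hlength (fun s => a * s) (fun s => e * s + k * s ^+ 2) <= `|a| + `|e| + 2 * `|k|.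
Proof.
rewrite /hlength.
set B := `|a| + `|e| + 2 * `|k|.
set I := (\int[_]_(_ in _) _)%E.
have I0 : (0 <= I)%E by apply: integral_ge0 => t _; rewrite lee_fin sqrtr_ge0.
have IB : (I <= B%:E)%E.
  rewrite /I.
  have -> : (\int[lebesgue_measure]_(t in `[0%R, 1%R]) (Num.sqrt ((fun s => a * s)^`()%classic t ^+ 2 +
        (fun s => e * s + k * s ^+ 2)^`()%classic t ^+ 2))%:E =
      \int[lebesgue_measure]_(t in `[0%R, 1%R]) (Num.sqrt (a ^+ 2 + (e + 2 * k * t) ^+ 2))%:E)%E.
    apply: eq_integral => t _.
    have [_ ->] := dd (d2 a t).
    by have [_ ->] := dd (d1 e k t).
  apply: (@le_trans _ _ (\int[lebesgue_measure]_(t in `[0%R, 1%R]) (cst B%:E t))%E).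
    apply: ge0_le_integral => //.
    - apply/measurable_realfun.measurable_EFinP; apply: measurable_funS (measurable_realfun.continuous_measurable_fun _) => //.
      move=> x; apply: (@continuous_comp _ _ _ (fun x : R => a ^+ 2 + (e + 2 * k * x) ^+ 2)); last exact: sqrt_continuous.
      have hd : is_derive x 1 (fun x : R => a ^+ 2 + (e + 2 * k * x) ^+ 2) (2 * (e + 2 * k * x) * (2 * k)).
        apply: is_derive_eq. rewrite /GRing.scale /=. ring.
      apply: differentiable_continuous; apply/derivable1_diffP. exact: ex_derive.
    - move=> t; rewrite /= in_itv /= => /andP[] h0 h1; rewrite lee_fin.
      rewrite /B -(@ger0_norm _ (`|a| + `|e| + 2 * `|k|)) // -sqrtr_sqr.
      rewrite ler_sqrt ?sqr_ge0 //.
      have h2 : `|e + 2 * k * t| <= `|e| + 2 * `|k|.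
        apply: (le_trans (ler_normD _ _)); rewrite lerD2l normrM normrM ger0_norm // [X in _ * X]ger0_norm //.
        rewrite -[X in _ <= X]mulr1 ler_wpM2l //.
      have ha : 0 <= `|a| by [].
      have he : 0 <= `|e + 2 * k * t| by [].
      rewrite -[a ^+ 2](real_normK (num_real a)) -[(e + 2 * k * t) ^+ 2](real_normK (num_real _)).
      nra.
  rewrite integral_cst //= lebesgue_measure_itv /= lte01 /= sube0 mule1 //.
have fI : I \is a fin_num by rewrite ge0_fin_numE // (le_lt_trans IB) ?ltry.
by rewrite -lee_fin fineK.
Qed.
Lemma hlength_ge0 (x y : R -> R) : 0 <= hlength x y.
Proof.
rewrite /hlength; apply: fine_ge0; apply: integral_ge0 => t _.
by rewrite lee_fin sqrtr_ge0.
Qed.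

Lemma cc_le_len (p : H R) x y z : horizontal_curve x y z -> (x 0, y 0, z 0) = origin R ->
  (x 1, y 1, z 1) = p -> cc_dist (origin R) p <= hlength x y.
Proof.
move=> hc h0 h1; rewrite /cc_dist.
have := @ge_inf R [set l | exists x y z : R -> R, horizontal_curve x y z /\
          (x 0, y 0, z 0) = origin R /\ (x 1, y 1, z 1) = p /\ l = hlength x y].
apply.
  exists 0 => l [x' [y' [z' [_ [_ [_ ->]]]]]]; exact: hlength_ge0.
by exists x, y, z.
Qed.

Lemma cc_le (a b c : R) : a != 0 ->
  cc_dist (origin R) (a, b, c) <= `|a| + `|b - 6 * c / a| + 2 * `|6 * c / a|.
Proof.
move=> a0.
set k := 6 * c / a.
have h := @cc_le_len (a, b, c) _ _ _ (curve_ok a (b - k) k).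
apply: (le_trans (h _ _)).
- by rewrite /origin !(mulr0, expr0n, addr0).
- rewrite !(mulr1, expr1n); congr (_, _, _); rewrite /k; [ring | by field].
- exact: len_le.
Qed.

Lemma Bcc_side (a b c : R) : (a = 100 \/ a = -100) -> `|b| <= 100 -> `|c| <= 100 ->
  Bcc 218 (a, b, c).
Proof.
move=> ha hb hc; rewrite /Bcc /=.
have a0 : a != 0 by case: ha => ->; [|rewrite oppr_eq0]; apply/eqP; lra.
apply: (le_trans (cc_le b c a0)).
have na : `|a| = 100 by case: ha => ->; rewrite ?normrN; apply/ger0_norm; lra.
have hk : `|6 * c / a| <= 6.
  rewrite normrM normfV na normrM (ger0_norm (_ : 0 <= 6)); last lra.
  rewrite ler_pdivrMr; last lra. nra.
have : `|b - 6 * c / a| <= `|b| + `|6 * c / a| by apply: ler_normB.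
rewrite na. lra.
Qed.

Lemma box_Bbar (x y z : R) : `|x| <= 100 -> `|y| <= 100 -> `|z| <= 100 ->
  Bbar 218 (x, y, z).
Proof.
move=> bx by' bz C cC sC.
have u1 := sC _ (@Bcc_side 100 y z (or_introl erefl) by' bz).
have u2 := sC _ (@Bcc_side (-100) y z (or_intror erefl) by' bz).
have hx' : -100 <= x <= 100 by rewrite -ler_norml bx.
case/andP: hx' => hx1 hx2.
have := cC _ _ ((x + 100) / 200) u1 u2.
have -> : hadd (hscale ((x + 100) / 200) (100, y, z)) (hscale (1 - (x + 100) / 200) (-100, y, z)) = (x, y, z).
  rewrite /hadd /hscale /hx /hy /hz /=; congr (_, _, _); by field.
move=> h; apply: h.
- apply: divr_ge0; lra.
- rewrite ler_pdivrMr; lra.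
Qed.
Lemma hmul0 (W : H R) : hmul W (0, 0, 0) = W.
Proof. by case: W => [[w1 w2] w3]; rewrite /hmul /hx /hy /hz /=; congr (_, _, _); ring. Qed.

Lemma join (U A : set (H R)) (W V X : H R) (a b t1 t2 : R) : ruled U A ->
  A W -> A V -> U W -> U V -> U X -> W != V -> (a != 0 \/ b != 0) ->
  V = hmul W (t1 * a, t1 * b, 0) -> X = hmul W (t2 * a, t2 * b, 0) -> A X.
Proof.
move=> rA AW AV UW UV UX WV ab eV eX.
pose L := [set hmul W (t * a, t * b, 0) | t in [set: R]].
have hL : horizontal_line L by exists W, a, b.
have LW : L W by exists 0 => //; rewrite !mul0r hmul0.
have := rA L hL.
have /[swap] /[apply] : exists p q, p != q /\ (L `&` U `&` A) p /\ (L `&` U `&` A) q.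
  exists W, V; split => //; split; split => //; split => //.
  by exists t1.
apply; split => //; by exists t2.
Qed.

Lemma Lline (U A : set (H R)) (s l : R) : ruled U A ->
  (@M1 R `|` @M2 R) `&` U `<=` A -> s != 0 ->
  U (s, 0, 0) -> U (0, 2 / s, 1) -> U (s * (1 - l), 2 * l / s, l) -> A (s * (1 - l), 2 * l / s, l).
Proof.
move=> rA sA s0 U1 U2 UP.
have A1 : A (s, 0, 0) by apply: sA; split => //; left; exists s.
have A2 : A (0, 2 / s, 1) by apply: sA; split => //; right; exists (2 / s).
apply: (@join U A (s, 0, 0) (0, 2 / s, 1) _ (- s) (2 / s) 1 l) => //.
- apply/eqP => -[] _ _ /eqP; rewrite eq_sym oner_eq0 //.
- by left; rewrite oppr_eq0.
- rewrite /hmul /hx /hy /hz /=; congr (_, _, _); by field.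
- rewrite /hmul /hx /hy /hz /=; congr (_, _, _); by field.
Qed.
Definition fD (X : H R) := hy X + 2 * hx X - 2.
Definition lam (X : H R) := (hy X - 2 * hz X) / fD X.
Definition w1 (X : H R) := 1 - lam X.
Definition w2 (X : H R) := 2 * lam X.
Definition fa (X : H R) := hx X - w1 X.
Definition fb (X : H R) := hy X - w2 X.
Definition fc (X : H R) := hz X - lam X.
Definition A2 (X : H R) := fa X * fb X + 2 * (fc X * fc X).
Definition A1 (X : H R) := w1 X * fb X + w2 X * fa X - 2 * fc X * (1 - 2 * lam X).
Definition tau (X : H R) := - A1 X / A2 X.
Definition v1 (X : H R) := w1 X + tau X * fa X.
Definition v2 (X : H R) := w2 X + tau X * fb X.
Definition v3 (X : H R) := lam X + tau X * fc X.
Definition sg (X : H R) := v1 X / (1 - v3 X).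
Definition isg (X : H R) := 2 / sg X.

Lemma core (U A : set (H R)) (X : H R) : ruled U A ->
  (@M1 R `|` @M2 R) `&` U `<=` A ->
  fD X != 0 -> A2 X != 0 -> tau X != 0 -> 1 - v3 X != 0 -> sg X != 0 -> fa X != 0 ->
  U (1, 0, 0) -> U (0, 2, 1) -> U (sg X, 0, 0) -> U (0, isg X, 1) ->
  U (w1 X, w2 X, lam X) -> U (v1 X, v2 X, v3 X) -> U X -> A X.
Proof.
move=> rA sA hD hA2 ht hv3 hsg ha U1 U2 U3 U4 UW UV UX.
have eW : (w1 X, w2 X, lam X) = (1 * (1 - lam X), 2 * lam X / 1, lam X).
  by rewrite /w1 /w2 mul1r divr1.
have AW : A (w1 X, w2 X, lam X).
  rewrite eW; apply: (@Lline U A 1 (lam X) rA sA) => //.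
  - by rewrite divr1.
  - by rewrite -eW.
have key : v1 X * v2 X = 2 * v3 X * (1 - v3 X).
  rewrite /v1 /v2 /v3 /tau /A1 /w1 /w2.
  move: hA2; rewrite /A2 => hA2.
  by field.
have v10 : v1 X != 0.
  apply: contra hsg => /eqP h; rewrite /sg h mul0r //.
have eV : (v1 X, v2 X, v3 X) = (sg X * (1 - v3 X), 2 * v3 X / sg X, v3 X).
  congr (_, _, _); rewrite /sg.
  - by field.
  - have -> : v2 X = (v1 X)^-1 * (v1 X * v2 X) by rewrite mulKf.
    rewrite key. by rewrite invf_div; ring.
have AV : A (v1 X, v2 X, v3 X).
  rewrite eV; apply: (@Lline U A (sg X) (v3 X) rA sA) => //.
  - by rewrite -eV.
have ez : hz X = lam X + 2^-1 * (w1 X * fb X - w2 X * fa X).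
  rewrite /fb /fa /w1 /w2. move: hD; rewrite /lam /fD => hD. by field.
apply: (@join U A _ _ X (fa X) (fb X) (tau X) 1 rA AW AV UW UV UX).
- apply/eqP => -[] h _ _; move: h; rewrite /v1 -{1}(addr0 (w1 X)) => /addrI /esym /eqP.
  by rewrite mulf_eq0 (negbTE ht) (negbTE ha).
- by left.
- rewrite /hmul /hx /hy /hz /=; congr (_, _, _); rewrite /v1 /v2 /v3 /fc ?ez; move: ez; rewrite /hz => ez; rewrite ?ez; ring.
- move: ez; rewrite /hz => ez.
  rewrite {1}[X]surjective_pairing {1}[X.1]surjective_pairing /hmul /hx /hy /hz /= ez.
  by congr (_, _, _); rewrite /fa /fb /hx /hy; ring.
Qed.
Lemma cx (X0 : H R) : hx X @[X --> X0] --> hx X0.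
Proof. rewrite /hx. apply: cvg_comp; first exact: cvg_fst. exact: cvg_fst. Qed.
Lemma cy (X0 : H R) : hy X @[X --> X0] --> hy X0.
Proof. rewrite /hy. apply: cvg_comp; first exact: cvg_fst. exact: cvg_snd. Qed.
Lemma cz (X0 : H R) : hz X @[X --> X0] --> hz X0.
Proof. rewrite /hz. exact: cvg_snd. Qed.

Section Cont.
Variable X0 : H R.
Hypothesis hD : fD X0 != 0.
Hypothesis hA : A2 X0 != 0.
Hypothesis hv : 1 - v3 X0 != 0.
Hypothesis hs : sg X0 != 0.

Lemma cD : fD X @[X --> X0] --> fD X0.
Proof. apply: cvgB; last exact: cvg_cst. apply: cvgD; first exact: cy. apply: cvgM; [exact: cvg_cst| exact: cx]. Qed.
Lemma clam : lam X @[X --> X0] --> lam X0.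
Proof. apply: cvgM. apply: cvgB; first exact: cy. apply: cvgM; [exact: cvg_cst| exact: cz].
apply: cvgV => //. exact: cD. Qed.
Lemma cw1 : w1 X @[X --> X0] --> w1 X0.
Proof. apply: cvgB; [exact: cvg_cst | exact: clam]. Qed.
Lemma cw2 : w2 X @[X --> X0] --> w2 X0.
Proof. apply: cvgM; [exact: cvg_cst | exact: clam]. Qed.
Lemma cfa : fa X @[X --> X0] --> fa X0.
Proof. apply: cvgB; [exact: cx | exact: cw1]. Qed.
Lemma cfb : fb X @[X --> X0] --> fb X0.
Proof. apply: cvgB; [exact: cy | exact: cw2]. Qed.
Lemma cfc : fc X @[X --> X0] --> fc X0.
Proof. apply: cvgB; [exact: cz | exact: clam]. Qed.
Lemma cA2 : A2 X @[X --> X0] --> A2 X0.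
Proof. apply: cvgD; first (apply: cvgM; [exact: cfa | exact: cfb]).
apply: cvgM; first exact: cvg_cst. apply: cvgM; exact: cfc. Qed.
Lemma cA1 : A1 X @[X --> X0] --> A1 X0.
Proof. apply: cvgB; first (apply: cvgD; apply: cvgM; [exact: cw1 | exact: cfb | exact: cw2 | exact: cfa]).
apply: cvgM; first (apply: cvgM; [exact: cvg_cst | exact: cfc]).
apply: cvgB; first exact: cvg_cst. apply: cvgM; [exact: cvg_cst | exact: clam]. Qed.
Lemma ctau : tau X @[X --> X0] --> tau X0.
Proof. apply: cvgM; first (apply: cvgN; exact: cA1). apply: cvgV => //; exact: cA2. Qed.
Lemma cv1 : v1 X @[X --> X0] --> v1 X0.
Proof. apply: cvgD; first exact: cw1. apply: cvgM; [exact: ctau | exact: cfa]. Qed.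
Lemma cv2 : v2 X @[X --> X0] --> v2 X0.
Proof. apply: cvgD; first exact: cw2. apply: cvgM; [exact: ctau | exact: cfb]. Qed.
Lemma cv3 : v3 X @[X --> X0] --> v3 X0.
Proof. apply: cvgD; first exact: clam. apply: cvgM; [exact: ctau | exact: cfc]. Qed.
Lemma csg : sg X @[X --> X0] --> sg X0.
Proof. apply: cvgM; first exact: cv1. apply: cvgV => //. apply: cvgB; [exact: cvg_cst | exact: cv3]. Qed.
Lemma cisg : isg X @[X --> X0] --> isg X0.
Proof. apply: cvgM; first exact: cvg_cst. apply: cvgV => //. exact: csg. Qed.
End Cont.

Lemma near_bd (f : H R -> R) X0 (l u : R) : f X @[X --> X0] --> f X0 -> l < f X0 -> f X0 < u ->
  \forall X \near X0, l < f X < u.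
Proof.
move=> hf hl hu.
have h1 := cvgr_gt (f X0) hf l hl.
have h2 := cvgr_lt (f X0) hf u hu.
near=> X; apply/andP; split; near: X; [exact: h1 | exact: h2].
Unshelve. all: by end_near.
Qed.
Lemma nb (v l u : R) : l < v < u -> -100 <= l -> u <= 100 -> `|v| <= 100.
Proof. move=> /andP[h1 h2] hl hu; rewrite ler_norml; apply/andP; split; lra. Qed.
Lemma nzp (v l u : R) : l < v < u -> 0 <= l -> v != 0.
Proof. move=> /andP[h1 h2] hl; apply/eqP => h; rewrite h in h1; lra. Qed.
Lemma nzn (v l u : R) : l < v < u -> u <= 0 -> v != 0.
Proof. move=> /andP[h1 h2] hl; apply/eqP => h; rewrite h in h2; lra. Qed.

Definition X00 : H R := (1, 1, 3 / 10).
Lemma vD : fD X00 = 1. Proof. by rewrite /fD /hx /hy /=; ring. Qed.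
Lemma vlam : lam X00 = 2 / 5. Proof. by rewrite /lam vD /hy /hz /=; field. Qed.
Lemma vw1 : w1 X00 = 3 / 5. Proof. by rewrite /w1 vlam; field. Qed.
Lemma vw2 : w2 X00 = 4 / 5. Proof. by rewrite /w2 vlam; field. Qed.
Lemma vfa : fa X00 = 2 / 5. Proof. by rewrite /fa vw1 /hx /=; field. Qed.
Lemma vfb : fb X00 = 1 / 5. Proof. by rewrite /fb vw2 /hy /=; field. Qed.
Lemma vfc : fc X00 = - 1 / 10. Proof. by rewrite /fc vlam /hz /=; field. Qed.
Lemma vA2 : A2 X00 = 1 / 10. Proof. by rewrite /A2 vfa vfb vfc; field. Qed.
Lemma vA1 : A1 X00 = 12 / 25. Proof. by rewrite /A1 vw1 vw2 vfa vfb vfc vlam; field. Qed.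
Lemma vtau : tau X00 = - 24 / 5. Proof. by rewrite /tau vA1 vA2; field. Qed.
Lemma vv1 : v1 X00 = - 33 / 25. Proof. by rewrite /v1 vw1 vtau vfa; field. Qed.
Lemma vv2 : v2 X00 = - 4 / 25. Proof. by rewrite /v2 vw2 vtau vfb; field. Qed.
Lemma vv3 : v3 X00 = 22 / 25. Proof. by rewrite /v3 vlam vtau vfc; field. Qed.
Lemma vsg : sg X00 = - 11. Proof. by rewrite /sg vv1 vv3; field. Qed.
Lemma visg : isg X00 = - 2 / 11. Proof. by rewrite /isg vsg; field. Qed.
Lemma hD0 : fD X00 != 0. Proof. by rewrite vD oner_neq0. Qed.
Lemma hA0 : A2 X00 != 0. Proof. rewrite vA2; apply/eqP; lra. Qed.
Lemma hv0 : 1 - v3 X00 != 0. Proof. rewrite vv3; apply/eqP; lra. Qed.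
Lemma hs0 : sg X00 != 0. Proof. rewrite vsg; apply/eqP; lra. Qed.
Lemma nD : \forall X \near X00, 1/2 < fD X < 2.
Proof. apply: (near_bd (cD (X0:=X00))); rewrite vD; lra. Qed.
Lemma nlam : \forall X \near X00, -1 < lam X < 1.
Proof. apply: (near_bd (clam hD0)); rewrite vlam; lra. Qed.
Lemma nw1 : \forall X \near X00, -1 < w1 X < 1.
Proof. apply: (near_bd (cw1 hD0)); rewrite vw1; lra. Qed.
Lemma nw2 : \forall X \near X00, -1 < w2 X < 1.
Proof. apply: (near_bd (cw2 hD0)); rewrite vw2; lra. Qed.
Lemma nfa : \forall X \near X00, 1/10 < fa X < 1.
Proof. apply: (near_bd (cfa hD0)); rewrite vfa; lra. Qed.
Lemma nA2 : \forall X \near X00, 1/20 < A2 X < 1.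
Proof. apply: (near_bd (cA2 hD0)); rewrite vA2; lra. Qed.
Lemma ntau : \forall X \near X00, -10 < tau X < -1.
Proof. apply: (near_bd (ctau hD0 hA0)); rewrite vtau; lra. Qed.
Lemma nv1 : \forall X \near X00, -10 < v1 X < 10.
Proof. apply: (near_bd (cv1 hD0 hA0)); rewrite vv1; lra. Qed.
Lemma nv2 : \forall X \near X00, -10 < v2 X < 10.
Proof. apply: (near_bd (cv2 hD0 hA0)); rewrite vv2; lra. Qed.
Lemma nv3 : \forall X \near X00, -1 < v3 X < 19/20.
Proof. apply: (near_bd (cv3 hD0 hA0)); rewrite vv3; lra. Qed.
Lemma nsg : \forall X \near X00, -20 < sg X < -1.
Proof. apply: (near_bd (csg hD0 hA0 hv0)); rewrite vsg; lra. Qed.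
Lemma nisg : \forall X \near X00, -1 < isg X < 1.
Proof. apply: (near_bd (cisg hD0 hA0 hv0 hs0)); rewrite visg; lra. Qed.
Lemma nx : \forall X \near X00, 0 < hx X < 2.
Proof. apply: (near_bd (cx (X0:=X00))); rewrite /hx /=; lra. Qed.
Lemma ny : \forall X \near X00, 0 < hy X < 2.
Proof. apply: (near_bd (cy (X0:=X00))); rewrite /hy /=; lra. Qed.
Lemma nz : \forall X \near X00, 0 < hz X < 1.
Proof. apply: (near_bd (cz (X0:=X00))); rewrite /hz /=; lra. Qed.
Lemma nz1 (v : R) : v < 19/20 -> 1 - v != 0.
Proof. move=> h; apply/eqP => e; have : v = 1 by rewrite -[v]add0r -e; ring. lra. Qed.
Lemma nbA (v : R) : -1 < v < 1 -> `|v| <= 100. Proof. move=> h; apply: (nb h); lra. Qed.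
Lemma nbB (v : R) : -10 < v < 10 -> `|v| <= 100. Proof. move=> h; apply: (nb h); lra. Qed.
Lemma nbC (v : R) : -1 < v < 19/20 -> `|v| <= 100. Proof. move=> h; apply: (nb h); lra. Qed.
Lemma nbD (v : R) : -20 < v < -1 -> `|v| <= 100. Proof. move=> h; apply: (nb h); lra. Qed.
Lemma nbE (v : R) : 0 < v < 2 -> `|v| <= 100. Proof. move=> h; apply: (nb h); lra. Qed.
Lemma nbF (v : R) : 0 < v < 1 -> `|v| <= 100. Proof. move=> h; apply: (nb h); lra. Qed.
Lemma U1 : Bbar 218 ((1 : R), 0, 0).
Proof. by apply: box_Bbar; rewrite ?normr0 ?normr1 //; lra. Qed.
Lemma U2 : Bbar 218 ((0 : R), 2, 1).
Proof. by apply: box_Bbar; rewrite ?normr0 ?normr1 ?(@ger0_norm _ 2) //; lra. Qed.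
Lemma U0 (a : R) : `|a| <= 100 -> Bbar 218 (a, 0, 0).
Proof. by move=> h; apply: box_Bbar; rewrite ?normr0 //; lra. Qed.
Lemma U0' (a : R) : `|a| <= 100 -> Bbar 218 (0, a, 1).
Proof. by move=> h; apply: box_Bbar; rewrite ?normr0 ?normr1 //; lra. Qed.
End T.

Theorem mainTheorem18 (R : realType) :
  exists r0 : R, 1 < r0 /\
    forall A : set (H R),
      ruled (Bbar r0) A ->
      (@M1 R `|` @M2 R) `&` Bbar r0 `<=` A ->
      interior A !=set0.
Proof.
exists 218; split; first lra.
move=> A rA sA.
exists (X00 R); rewrite /interior /=.
near=> X.
have bD : 1/2 < fD X < 2 by near: X; exact: nD.
have blam : -1 < lam X < 1 by near: X; exact: nlam.
have bw1 : -1 < w1 X < 1 by near: X; exact: nw1.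
have bw2 : -1 < w2 X < 1 by near: X; exact: nw2.
have bfa : 1/10 < fa X < 1 by near: X; exact: nfa.
have bA2 : 1/20 < A2 X < 1 by near: X; exact: nA2.
have btau : -10 < tau X < -1 by near: X; exact: ntau.
have bv1 : -10 < v1 X < 10 by near: X; exact: nv1.
have bv2 : -10 < v2 X < 10 by near: X; exact: nv2.
have bv3 : -1 < v3 X < 19/20 by near: X; exact: nv3.
have bsg : -20 < sg X < -1 by near: X; exact: nsg.
have bisg : -1 < isg X < 1 by near: X; exact: nisg.
have bx : 0 < hx X < 2 by near: X; exact: nx.
have by' : 0 < hy X < 2 by near: X; exact: ny.
have bz : 0 < hz X < 1 by near: X; exact: nz.
apply: (core rA sA).
- exact: nzp bD _.
- exact: nzp bA2 _.
- exact: nzn btau _.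
- case/andP: bv3 => h1 h2; exact: nz1 h2.
- exact: nzn bsg _.
- exact: nzp bfa _.
- exact: U1.
- exact: U2.
- apply: U0; exact: (nbD bsg).
- apply: U0'; exact: (nbA bisg).
- apply: box_Bbar; [exact: (nbA bw1) | exact: (nbA bw2) | exact: (nbA blam)].
- apply: box_Bbar; [exact: (nbB bv1) | exact: (nbB bv2) | exact: (nbC bv3)].
- rewrite [X]surjective_pairing [X.1]surjective_pairing.
  apply: box_Bbar; [exact: (nbE bx) | exact: (nbE by') | exact: (nbF bz)].
Unshelve. all: by end_near.
Qed.
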